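(* Let $A\in\mathbb{R}^{m\times n}$ with $A'A$ invertible, $y\in\mathbb{R}^m$, $\gamma>0$, $\mu\ge0$. Then the optimal value $\zeta_{CR}$ of (CR) satisfies $$\zeta_{CR}=\max_{p\in\mathbb{R}^n}\ \|y\|_2^2-\Big(A'y-\tfrac{1}{2\gamma}p\Big)'(A'A)^{-1}\Big(A'y-\tfrac{1}{2\gamma}p\Big)+\sum_{i=1}^n\min\Big\{0,\ \mu-\tfrac{p_i^2}{4\gamma}\Big\}.$$
   Context: (CR) is the problem $\zeta_{CR}=\min_{x,z}\ \|y-Ax\|_2^2+\frac1\gamma\sum_{i=1}^n \frac{x_i^2}{z_i}+\mu\sum_{i=1}^n z_i$ subject to $x\in\mathbb{R}^n$, $z\in[0,1]^n$, where $x_i^2/z_i=0$ if $x_i=z_i=0$ and $x_i^2/z_i=+\infty$ if $z_i=0$, $x_i\ne0$. *)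

(* Defs.v *)
From HB Require Import structures.
From mathcomp Require Import all_boot all_order all_algebra.
From mathcomp Require Import all_classical all_reals ereal.
Set Implicit Arguments. Unset Strict Implicit. Unset Printing Implicit Defensive.
Import Order.TTheory GRing.Theory Num.Theory.
Local Open Scope ring_scope.

Definition sqnorm (R : realType) (k : nat) (v : 'cV[R]_k) : R :=
  \sum_(i < k) v i 0 ^+ 2.

(* perspective term x^2/z with the conventions of (CR):
   0 if x = z = 0, +oo if z = 0 and x <> 0. *)
Definition persp (R : realType) (x z : R) : \bar R :=
  if z == 0 then (if x == 0 then 0%E else +oo%E) else (x ^+ 2 / z)%:E.

Definition CR_obj (R : realType) (m n : nat) (A : 'M[R]_(m, n)) (y : 'cV[R]_m)
    (gamma mu : R) (x z : 'cV[R]_n) : \bar R :=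
  ((sqnorm (y - A *m x))%:E
   + (gamma^-1)%:E * (\sum_(i < n) persp (x i ord0) (z i ord0))
   + (mu * \sum_(i < n) z i 0)%:E)%E.

Definition CR_feasible (R : realType) (n : nat) (z : 'cV[R]_n) : Prop :=
  forall i : 'I_n, 0 <= z i 0 <= 1.

Definition zeta_CR (R : realType) (m n : nat) (A : 'M[R]_(m, n)) (y : 'cV[R]_m)
    (gamma mu : R) : \bar R :=
  ereal_inf [set e | exists x z : 'cV[R]_n, CR_feasible z /\ e = CR_obj A y gamma mu x z].

Definition CR_dual (R : realType) (m n : nat) (A : 'M[R]_(m, n)) (y : 'cV[R]_m)
    (gamma mu : R) (p : 'cV[R]_n) : R :=
  let v := A^T *m y - (2 * gamma)^-1 *: p in
  sqnorm y - (v^T *m invmx (A^T *m A) *m v) 0 0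
  + \sum_(i < n) Num.min 0 (mu - p i 0 ^+ 2 / (4 * gamma)).

(* Main.v *)
Require Import Defs.
From HB Require Import structures.
From mathcomp Require Import all_boot all_order all_algebra.
From mathcomp Require Import all_classical all_reals all_analysis.
From mathcomp Require Import ring lra.
Import Order.TTheory GRing.Theory Num.Theory.
Import numFieldNormedType.Exports.
Local Open Scope classical_set_scope.
Local Open Scope ring_scope.

Lemma tr1 (R : realType) (B : 'M[R]_1) : B^T = B.
Proof. by apply/matrixP => i j; rewrite !ord1 mxE. Qed.

Lemma sqnormE (R : realType) k (v : 'cV[R]_k) : sqnorm v = (v^T *m v) 0 0.
Proof. by rewrite /sqnorm mxE; apply: eq_bigr => i _; rewrite mxE expr2. Qed.

Lemma dotE (R : realType) k (q x : 'cV[R]_k) :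
  \sum_(i < k) q i 0 * x i 0 = (x^T *m q) 0 0.
Proof. by rewrite mxE; apply: eq_bigr => i _; rewrite mxE mulrC. Qed.

Lemma trM_sym (R : realType) m n (A : 'M[R]_(m, n)) : (A^T *m A)^T = A^T *m A.
Proof. by rewrite trmx_mul trmxK. Qed.

Lemma trN_sym (R : realType) m n (A : 'M[R]_(m, n)) :
  (invmx (A^T *m A))^T = invmx (A^T *m A).
Proof. by rewrite trmx_inv trM_sym. Qed.

Lemma eB (R : realType) k l (P Q : 'M[R]_(k,l)) i j : (P - Q) i j = P i j - Q i j.
Proof. by rewrite !mxE. Qed.
Lemma eZ (R : realType) k l (a : R) (P : 'M[R]_(k,l)) i j : (a *: P) i j = a * P i j.
Proof. by rewrite !mxE. Qed.

Lemma eT (R : realType) k l (P : 'M[R]_(k,l)) i j : P^T i j = P j i.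
Proof. by rewrite !mxE. Qed.

Lemma keyid (R : realType) m n (A : 'M[R]_(m, n)) (y : 'cV[R]_m) (gamma : R)
  (q x : 'cV[R]_n) : A^T *m A \in unitmx -> gamma != 0 ->
  let w := A^T *m y - (2 * gamma)^-1 *: q in
  let N := invmx (A^T *m A) in
  sqnorm (y - A *m x) + gamma^-1 * \sum_(i < n) q i 0 * x i 0
  - (sqnorm y - (w^T *m N *m w) 0 0) = sqnorm (A *m (x - N *m w)).
Proof.
move=> Mu g0 w N.
have wE : w = A^T *m y - (2 * gamma)^-1 *: q by [].
clearbody w.
set M := A^T *m A.
have trB : forall k l (P Q : 'M[R]_(k,l)), (P - Q)^T = P^T - Q^T.
  by move=> *; apply/matrixP=> i j; rewrite !mxE.
have MN : M *m N = 1 by rewrite /N mulmxV.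
have MT : M^T = M by rewrite /M trM_sym.
have NM : N *m M = 1 by rewrite /N mulVmx.
have f1 : sqnorm (y - A *m x) = (y^T *m y) 0 0 - 2 * (x^T *m (A^T *m y)) 0 0
   + (x^T *m (M *m x)) 0 0.
  rewrite sqnormE trB mulmxBr !mulmxBl !eB.
  have -> : ((A *m x)^T *m y) 0 0 = (x^T *m (A^T *m y)) 0 0.
    by rewrite trmx_mul mulmxA.
  have -> : (y^T *m (A *m x)) 0 0 = (x^T *m (A^T *m y)) 0 0.
    by rewrite -(tr1 _ (y^T *m (A *m x))) !trmx_mul trmxK mulmxA.
  have -> : ((A *m x)^T *m (A *m x)) 0 0 = (x^T *m (M *m x)) 0 0.
    by rewrite trmx_mul !mulmxA.
  lra.
have f2 : sqnorm (A *m (x - N *m w)) = (x^T *m (M *m x)) 0 0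
   - 2 * (x^T *m w) 0 0 + (w^T *m N *m w) 0 0.
  have eA : forall v : 'cV[R]_n, (A *m v)^T *m (A *m v) = v^T *m (M *m v) by move=> v; rewrite trmx_mul !mulmxA.
  have e1 : M *m (N *m w) = w by rewrite mulmxA MN mul1mx.
  have e3 : ((N *m w)^T *m (M *m x)) 0 0 = (x^T *m w) 0 0.
    rewrite -(tr1 _ ((N *m w)^T *m (M *m x))) !trmx_mul !trmxK -/M -mulmxA.
    by rewrite (mulmxA M) MN mul1mx.
  have e2 : ((N *m w)^T *m w) 0 0 = (w^T *m N *m w) 0 0.
    by rewrite trmx_mul /N trN_sym.
  have e4 : (x^T *m (M *m (N *m w))) 0 0 = (x^T *m w) 0 0 by rewrite e1.
  rewrite sqnormE eA.
  move: (N *m w) e1 e2 e3 e4 => u e1 e2 e3 e4.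
  rewrite trB mulmxBr !mulmxBl !mulmxBr !eB e1 e2 e3.
  lra.
have f3 : (x^T *m w) 0 0 = (x^T *m (A^T *m y)) 0 0
     - (2 * gamma)^-1 * (x^T *m q) 0 0.
  by rewrite wE mulmxBr eB -scalemxAr eZ.
rewrite f1 f2 dotE f3.
have : gamma^-1 = 2 * (2 * gamma)^-1.
  by rewrite invfM mulrA divff ?mul1r // pnatr_eq0.
move=> ->. rewrite sqnormE. lra.
Qed.

Lemma lim0 (R : realFieldType) (a b e : R) : 0 < e ->
  (forall t, 0 < t -> t < e -> t * a <= t ^+ 2 * b) -> a <= 0.
Proof.
move=> e0 H; rewrite leNgt; apply/negP => a0.
pose c := `|b| + 1.
have c0 : 0 < c by rewrite /c ltr_pwDr // normr_ge0.
pose t := Num.min (e / 2) (a / c).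
have t0 : 0 < t by rewrite /t lt_min !divr_gt0.
have te : t < e by rewrite /t gt_min ltr_pdivrMr // ltr_pMr // ltr1n.
have tac : t * c <= a by rewrite -ler_pdivlMr // /t ge_min lexx orbT.
have := H t t0 te; rewrite expr2 -mulrA ler_pM2l // => h.
have bb : b <= `|b| by exact: ler_norm.
have : t * b <= t * `|b| by rewrite ler_pM2l.
move: tac; rewrite /c mulrDr mulr1; lra.
Qed.

Definition phi {R : realFieldType} (gamma mu s : R) : R :=
  Num.min 0 (mu - s ^+ 2 / (4 * gamma)).
Definition pr {R : realFieldType} (x z : R) : R := if z == 0 then 0 else x ^+ 2 / z.

Lemma coord_opt_pos (R : realFieldType) (gamma mu b s x : R) :
  0 < gamma -> 0 <= mu -> 0 <= s ->
  (forall t, t * x / gamma - t ^+ 2 * b + phi gamma mu (s + t) - phi gamma mu s <= 0) ->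
  exists z, (0 <= z <= 1) /\ (z = 0 -> x = 0) /\
    pr x z / gamma + mu * z = s * x / gamma + phi gamma mu s.
Proof.
move=> g0 m0 s0 H.
pose k := (4 * gamma)^-1.
have k0 : 0 < k by rewrite /k invr_gt0 mulr_gt0 // ltr0n.
have gk : gamma^-1 = 4 * k by rewrite /k invfM mulrA divff ?mul1r // pnatr_eq0.
have dE : forall u, u / gamma = 4 * k * u by move=> u; rewrite gk mulrC.
have mk : 4 * gamma * mu * k = mu.
  by rewrite /k mulrAC divff ?mul1r // mulf_neq0 // ?pnatr_eq0 // gt_eqF.
have phi0 : forall v, v ^+ 2 <= 4 * gamma * mu -> phi gamma mu v = 0.
  move=> v hv; rewrite /phi -/k; apply/min_l; rewrite subr_ge0.
  by rewrite -mk ler_pM2r.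
have phi1 : forall v, 4 * gamma * mu <= v ^+ 2 -> phi gamma mu v = mu - v ^+ 2 * k.
  move=> v hv; rewrite /phi -/k; apply/min_r; rewrite subr_le0.
  by rewrite -mk ler_pM2r.
have H' : forall t, t * x * (4 * k) - t ^+ 2 * b + phi gamma mu (s + t)
    - phi gamma mu s <= 0.
  by move=> t; have := H t; rewrite gk.
set D := 4 * gamma * mu.
have D0 : 0 <= D by rewrite /D mulr_ge0 // mulr_ge0 // ltW.
case: (ltgtP (s ^+ 2) D) => sD.
-
  pose e := Num.min 1 ((D - s ^+ 2) / (2 * s + 1)).
  have s1 : 0 < 2 * s + 1 by lra.
  have e0 : 0 < e by rewrite /e lt_min ltr01 divr_gt0 // subr_gt0.
  have te : forall t, 0 < t -> t < e -> t <= 1 /\ t * (2 * s + 1) <= D - s ^+ 2.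
    move=> t t0; rewrite /e lt_min => /andP[t1 t2]; split; first exact: ltW.
    by rewrite -ler_pdivlMr // ltW.
  have hs : phi gamma mu s = 0 by apply: phi0; exact: ltW.
  have xle : 4 * k * x <= 0.
    apply: (@lim0 _ _ b e e0) => t t0 tlt.
    have [t1 t2] := te t t0 tlt.
    have tt : 0 <= t * (1 - t) by rewrite mulr_ge0 // ?subr_ge0 // ltW.
    have st : 0 <= s * t by rewrite mulr_ge0 // ltW.
    have hp : (s + t) ^+ 2 <= D by rewrite sqrrD; lra.
    have := H' t; rewrite hs phi0 //; lra.
  have xge : - (4 * k * x) <= 0.
    apply: (@lim0 _ _ b e e0) => t t0 tlt.
    have [t1 t2] := te t t0 tlt.
    have tt : 0 <= t * (1 - t) by rewrite mulr_ge0 // ?subr_ge0 // ltW.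
    have st : 0 <= s * t by rewrite mulr_ge0 // ltW.
    have hp : (s + - t) ^+ 2 <= D by rewrite sqrrD; lra.
    have := H' (- t); rewrite hs phi0 //; lra.
  have x0 : x = 0.
    have : 4 * k * x = 0 by apply/eqP; rewrite eq_le xle /=; lra.
    by move/eqP; rewrite !mulf_eq0 pnatr_eq0 /= (gt_eqF k0) => /eqP.
  exists 0; split; first by rewrite lexx ler01.
  split=> //; rewrite /pr eqxx hs x0; lra.
-
  have sp : 0 < s.
    rewrite lt_def s0 andbT; apply/eqP => s00; move: sD; rewrite s00 expr0n /=; lra.
  pose e := Num.min 1 ((s ^+ 2 - D) / (2 * s + 1)).
  have s1 : 0 < 2 * s + 1 by lra.
  have e0 : 0 < e by rewrite /e lt_min ltr01 divr_gt0 // subr_gt0.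
  have te : forall t, 0 < t -> t < e -> t <= 1 /\ t * (2 * s + 1) <= s ^+ 2 - D.
    move=> t t0; rewrite /e lt_min => /andP[t1 t2]; split; first exact: ltW.
    by rewrite -ler_pdivlMr // ltW.
  have hs : phi gamma mu s = mu - s ^+ 2 * k by apply: phi1; exact: ltW.
  have xle : 4 * k * x - 2 * k * s <= 0.
    apply: (@lim0 _ _ (b + k) e e0) => t t0 tlt.
    have [t1 t2] := te t t0 tlt.
    have st : 0 <= s * t by rewrite mulr_ge0 // ltW.
    have t2p : 0 <= t ^+ 2 by exact: sqr_ge0.
    have hp : D <= (s + t) ^+ 2 by rewrite sqrrD; lra.
    have := H' t; rewrite hs phi1 //; rewrite sqrrD; lra.
  have xge : - (4 * k * x - 2 * k * s) <= 0.
    apply: (@lim0 _ _ (b + k) e e0) => t t0 tlt.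
    have [t1 t2] := te t t0 tlt.
    have st : 0 <= s * t by rewrite mulr_ge0 // ltW.
    have t2p : 0 <= t ^+ 2 by exact: sqr_ge0.
    have hp : D <= (s + - t) ^+ 2 by rewrite sqrrD; lra.
    have := H' (- t); rewrite hs phi1 //; rewrite sqrrD; lra.
  have xs : x = s / 2.
    have : 4 * k * (x - s / 2) = 0.
      by apply/eqP; rewrite eq_le; apply/andP; split; lra.
    move/eqP; rewrite mulf_eq0 subr_eq0 => /orP[|/eqP//].
    by rewrite mulf_eq0 pnatr_eq0 /= gt_eqF.
  exists 1; split; first by rewrite lexx ler01.
  split; first by move/eqP; rewrite oner_eq0.
  rewrite /pr oner_eq0 divr1 hs !dE xs mulr1.
  have mE : mu = 4 * gamma * mu * k by rewrite mk.
  rewrite /k in mE *; field.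
  by rewrite (gt_eqF g0).
-
  have hs : phi gamma mu s = 0 by apply: phi0; rewrite sD.
  have mE : mu = s ^+ 2 * k by rewrite -mk -/D -sD mulrC.
  have xle : 4 * k * x - 2 * k * s <= 0.
    apply: (@lim0 _ _ (b + k) 1 ltr01) => t t0 tlt.
    have st : 0 <= s * t by rewrite mulr_ge0 // ltW.
    have t2p : 0 <= t ^+ 2 by exact: sqr_ge0.
    have hp : D <= (s + t) ^+ 2 by rewrite sqrrD; lra.
    have := H' t; rewrite hs phi1 // mE sqrrD; lra.
  have xge : 0 <= x.
    have [s00|spos] := eqVneq s 0.
      have : - (4 * k * x) <= 0.
        apply: (@lim0 _ _ (b + k) 1 ltr01) => t t0 tlt.
        have t2p : 0 <= t ^+ 2 by exact: sqr_ge0.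
        have hp : D <= (s + - t) ^+ 2 by rewrite s00 -sD s00 expr0n /= add0r sqrrN.
        have := H' (- t); rewrite hs phi1 // mE s00 sqrrD; lra.
      move=> h; have : 0 <= 4 * k * x by lra.
      by rewrite pmulr_rge0 // mulr_gt0 // ltr0n.
    have sp : 0 < s by rewrite lt_def spos.
    have : - (4 * k * x) <= 0.
      apply: (@lim0 _ _ b s sp) => t t0 tlt.
      have tt : 0 <= t * (s - t) by rewrite mulr_ge0 // ?subr_ge0 // ltW.
      have hp : (s + - t) ^+ 2 <= D.
        have st : 0 <= s * t by rewrite mulr_ge0 // ltW.
        rewrite -sD sqrrD; lra.
      have := H' (- t); rewrite hs phi0 //; lra.
    move=> h; have : 0 <= 4 * k * x by lra.
    by rewrite pmulr_rge0 // mulr_gt0 // ltr0n.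
  have [x0|xn0] := eqVneq x 0.
    exists 0; split; first by rewrite lexx ler01.
    split=> //; rewrite /pr eqxx hs x0; lra.
  have xp : 0 < x by rewrite lt_def xn0.
  have sp : 0 < s.
    have : 0 < 4 * k * x by rewrite !mulr_gt0 // ltr0n.
    move=> h; have : 0 < 2 * k * s by lra.
    by rewrite pmulr_rgt0 // mulr_gt0 // ltr0n.
  have xs2 : 2 * x <= s.
    have : 2 * k * (2 * x) <= 2 * k * s by lra.
    by rewrite ler_pM2l // mulr_gt0 // ltr0n.
  exists (2 * x / s); split.
    apply/andP; split; first by rewrite divr_ge0 // mulr_ge0 // ?ler0n ?ltW.
    by rewrite ler_pdivrMr // mul1r.
  have z0 : 2 * x / s != 0.
    by rewrite !mulf_eq0 invr_eq0 pnatr_eq0 /= (gt_eqF sp) (gt_eqF xp).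
  split; first by move=> h; move: z0; rewrite h eqxx.
  rewrite /pr (negbTE z0) hs !dE addr0.
  rewrite mE /k; field.
  by rewrite (gt_eqF sp) (gt_eqF xp) (gt_eqF g0).
Qed.

Lemma phiN (R : realFieldType) (gamma mu s : R) : phi gamma mu (- s) = phi gamma mu s.
Proof. by rewrite /phi sqrrN. Qed.

Lemma coord_opt (R : realFieldType) (gamma mu b s x : R) :
  0 < gamma -> 0 <= mu ->
  (forall t, t * x / gamma - t ^+ 2 * b + phi gamma mu (s + t) - phi gamma mu s <= 0) ->
  exists z, (0 <= z <= 1) /\ (z = 0 -> x = 0) /\
    pr x z / gamma + mu * z = s * x / gamma + phi gamma mu s.
Proof.
move=> g0 m0 H; have [s0|s0] := leP 0 s; first exact: coord_opt_pos.
have hs : 0 <= - s by rewrite oppr_ge0 ltW.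
have hH : forall t, t * (- x) / gamma - t ^+ 2 * b + phi gamma mu (- s + t)
   - phi gamma mu (- s) <= 0.
  move=> t; rewrite (_ : - s + t = - (s + - t)); last by rewrite opprD opprK.
  by rewrite !phiN; have := H (- t); rewrite sqrrN; lra.
have [z [z01 [zx e]]] := @coord_opt_pos R gamma mu b (- s) (- x) g0 m0 hs hH.
exists z; split=> //; split.
  by move=> /zx /eqP; rewrite oppr_eq0 => /eqP.
by move: e; rewrite /pr sqrrN mulrNN phiN.
Qed.

Lemma fy (R : realFieldType) (gamma mu s x z : R) :
  0 < gamma -> 0 <= mu -> 0 <= z <= 1 -> (z = 0 -> x = 0) ->
  s * x / gamma + phi gamma mu s <= pr x z / gamma + mu * z.
Proof.
move=> g0 m0 /andP[z0 z1] zx.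
pose k := (4 * gamma)^-1.
have k0 : 0 < k by rewrite /k invr_gt0 mulr_gt0 // ltr0n.
have gk : gamma^-1 = 4 * k by rewrite /k invfM mulrA divff ?mul1r // pnatr_eq0.
have [ze|zn] := eqVneq z 0.
  rewrite /pr ze eqxx (zx ze) mulr0 !mul0r mulr0 add0r addr0.
  by rewrite /phi ge_min lexx.
have zp : 0 < z by rewrite lt_def zn.
pose c := mu - s ^+ 2 * k.
have hphi : phi gamma mu s <= z * c.
  rewrite /phi -/k -/c.
  have [cp|cn] := leP 0 c.
    by rewrite mulr_ge0.
  nra.
pose w := x / z.
have xw : x = w * z by rewrite /w divfK.
rewrite /pr (negbTE zn) xw.
have -> : (w * z) ^+ 2 / z = w ^+ 2 * z.
  by rewrite exprMn expr2 mulrA mulfK.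
rewrite !gk.
have h2 : 0 <= z * k * (2 * w - s) ^+ 2.
  by apply: mulr_ge0; [apply: mulr_ge0; exact: ltW | exact: sqr_ge0].
move: hphi; rewrite /c => hphi.
nra.
Qed.

Lemma cont_sum (T : topologicalType) (R : realType) (I : Type) (r : seq I)
  (f : I -> T -> R) : (forall i, continuous (f i)) ->
  continuous (fun x => \sum_(i <- r) f i x).
Proof.
move=> fc; elim: r => [|i r IH].
  under eq_fun do rewrite big_nil; exact: cst_continuous.
under eq_fun do rewrite big_cons.
by move=> x; apply: cvgD; [exact: fc | exact: IH].
Qed.

Lemma exists_max_box (R : realType) n (F : 'rV[R]_n -> R) (K : R) :
  0 <= K -> continuous F ->
  exists2 c : 'rV[R]_n, (forall i, `|c ord0 i| <= K) &
    forall v : 'rV[R]_n, (forall i, `|v ord0 i| <= K) -> F v <= F c.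
Proof.
move=> K0 Fc.
pose B := [set v : 'rV[R]_n | forall i, `[- K, K]%classic (v ord0 i)].
have cB : compact B.
  by apply: (@rV_compact _ _ (fun=> `[- K, K]%classic)) => _; exact: segment_compact.
have B0 : B !=set0.
  by exists 0 => i /=; rewrite mxE in_itv /= oppr_le0 K0.
have [c cB' cmax] := compact_EVT_max B0 cB (continuous_subspaceT Fc).
exists c.
  by move=> i; move: cB'; rewrite inE => /(_ i) /=; rewrite in_itv /= ler_norml.
move=> v vB; apply: cmax; rewrite inE => i /=; rewrite in_itv /= -ler_norml.
exact: vB.
Qed.

Lemma coord_cont (R : realType) n (i : 'I_n) : continuous (fun r : 'rV[R]_n => r ord0 i).
Proof. exact: coord_continuous. Qed.

Lemma contD (T : topologicalType) (R : realType) (f g : T -> R) :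
  continuous f -> continuous g -> continuous (fun x => f x + g x).
Proof. by move=> fc gc x; apply: cvgD; [exact: fc | exact: gc]. Qed.
Lemma contB (T : topologicalType) (R : realType) (f g : T -> R) :
  continuous f -> continuous g -> continuous (fun x => f x - g x).
Proof. by move=> fc gc x; apply: cvgB; [exact: fc | exact: gc]. Qed.
Lemma contM (T : topologicalType) (R : realType) (f g : T -> R) :
  continuous f -> continuous g -> continuous (fun x => f x * g x).
Proof. by move=> fc gc x; apply: cvgM; [exact: fc | exact: gc]. Qed.
Lemma contC (T : topologicalType) (R : realType) (a : R) :
  continuous (fun _ : T => a).
Proof. by move=> x; exact: cvg_cst. Qed.
Lemma contm (T : topologicalType) (R : realType) (f g : T -> R) :
  continuous f -> continuous g -> continuous (fun x => Num.min (f x) (g x)).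
Proof. by move=> fc gc x; apply: (@continuous_min R T f g x); [exact: fc | exact: gc]. Qed.

Lemma dual_cont (R : realType) m n (A : 'M[R]_(m, n)) (y : 'cV[R]_m) (gamma mu : R) :
  continuous (fun r : 'rV[R]_n => CR_dual A y gamma mu r^T).
Proof.
pose N := invmx (A^T *m A).
pose a := A^T *m y.
pose c := (2 * gamma)^-1.
have -> : (fun r : 'rV[R]_n => CR_dual A y gamma mu r^T) =
  (fun r => sqnorm y - \sum_j (\sum_k (a k 0 - c * r ord0 k) * N k j)
       * (a j 0 - c * r ord0 j)
     + \sum_i Num.min 0 (mu - r ord0 i ^+ 2 / (4 * gamma))).
  apply/funext => r; rewrite /CR_dual /=.
  congr (_ - _ + _).
    rewrite !mxE; apply: eq_bigr => j _; rewrite !mxE; congr (_ * _).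
    by apply: eq_bigr => k _; rewrite !mxE.
  by apply: eq_bigr => i _; rewrite !mxE.
have lin : forall j, continuous (fun r : 'rV[R]_n => a j 0 - c * r ord0 j).
  by move=> j; apply: contB; [exact: contC | apply: contM; [exact: contC | exact: coord_cont]].
apply: contD; first apply: contB; first exact: contC.
- apply: cont_sum => j; apply: contM; last exact: lin.
  apply: cont_sum => k; apply: contM; [exact: lin | exact: contC].
- apply: cont_sum => i; apply: contm; first exact: contC.
  apply: contB; first exact: contC.
  apply: contM; last exact: contC.
  under eq_fun do rewrite expr2.
  by apply: contM; exact: coord_cont.
Qed.

Lemma sqnorm_ge0 (R : realType) k (v : 'cV[R]_k) : 0 <= sqnorm v.
Proof. by rewrite /sqnorm sumr_ge0 // => i _; exact: sqr_ge0. Qed.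

Lemma persp_pr (R : realType) (x z : R) : ~~ ((z == 0) && (x != 0)) ->
  persp x z = (pr x z)%:E.
Proof.
rewrite /persp /pr; case: eqP => // _ /=; rewrite negbK => /eqP ->.
by rewrite eqxx.
Qed.

Lemma weak (R : realType) m n (A : 'M[R]_(m, n)) (y : 'cV[R]_m) (gamma mu : R)
  (q x z : 'cV[R]_n) : A^T *m A \in unitmx -> 0 < gamma -> 0 <= mu ->
  CR_feasible z -> ((CR_dual A y gamma mu q)%:E <= CR_obj A y gamma mu x z)%E.
Proof.
move=> Mu g0 m0 fz.
case: (boolP [exists i, (z i 0 == 0) && (x i 0 != 0)]) => [/existsP [i /andP[zi xi]] | /existsPn allz].
- have hp : persp (x i ord0) (z i ord0) = +oo%E by rewrite /persp zi (negbTE xi).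
  have ge0 : forall j, (0 <= persp (x j ord0) (z j ord0))%E.
    move=> j; rewrite /persp; case: eqP => zj; first by case: eqP.
    rewrite lee_fin divr_ge0 ?sqr_ge0 //.
    by have /andP[] := fz j.
  have hs : (\sum_(j < n) persp (x j ord0) (z j ord0) = +oo)%E.
    rewrite (bigD1 i) //= hp addye //.
    have : (0 <= \sum_(j < n | j != i) persp (x j ord0) (z j ord0))%E.
      by apply: sume_ge0 => j _; exact: ge0.
    by case: (\sum_(j < n | j != i) _)%E.
  rewrite /CR_obj hs gt0_muley ?lte_fin ?invr_gt0 // addey // addye //.
  exact: leey.
- have pE : forall j, persp (x j ord0) (z j ord0) = (pr (x j 0) (z j 0))%:E.
    by move=> j; apply: persp_pr; exact: allz.
  rewrite /CR_obj (eq_bigr _ (fun j _ => pE j)) sumEFin -EFinM -!EFinD lee_fin.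
  rewrite /CR_dual /=.
  have K := @keyid R m n A y gamma q x Mu (lt0r_neq0 g0); simpl in K.
  have K0 := sqnorm_ge0 _ _ (A *m (x - invmx (A^T *m A) *m
                 (A^T *m y - (2 * gamma)^-1 *: q))).
  have F : \sum_(i < n) (q i 0 * x i 0 / gamma + phi gamma mu (q i 0)) <=
           \sum_(i < n) (pr (x i 0) (z i 0) / gamma + mu * z i 0).
    apply: ler_sum => i _; apply: fy => //.
    by move=> zi; apply/eqP; have := allz i; rewrite zi eqxx /= negbK.
  have e1 : \sum_(i < n) (q i 0 * x i 0 / gamma + phi gamma mu (q i 0)) =
     gamma^-1 * \sum_(i < n) q i 0 * x i 0 + \sum_(i < n) phi gamma mu (q i 0).
    by rewrite big_split /= mulr_sumr; congr (_ + _); apply: eq_bigr => i _; rewrite mulrC.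
  have e2 : \sum_(i < n) (pr (x i 0) (z i 0) / gamma + mu * z i 0) =
     gamma^-1 * \sum_(i < n) pr (x i 0) (z i 0) + mu * \sum_(i < n) z i 0.
    by rewrite big_split /= !mulr_sumr; congr (_ + _); apply: eq_bigr => i _; rewrite mulrC.
  have e3 : \sum_(i < n) Num.min 0 (mu - q i 0 ^+ 2 / (4 * gamma)) =
     \sum_(i < n) phi gamma mu (q i 0) by [].
  rewrite e3; lra.
Qed.

Lemma deltaL (R : realType) k l (i : 'I_k) (v : 'M[R]_(k, l)) j :
  (delta_mx (0 : 'I_1) i *m v) 0 j = v i j.
Proof. by rewrite -rowE mxE. Qed.

Lemma Qsub (R : realType) n (N : 'M[R]_n) (w d : 'cV[R]_n) : N^T = N ->
  ((w - d)^T *m N *m (w - d)) 0 0 =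
  (w^T *m N *m w) 0 0 - 2 * (d^T *m N *m w) 0 0 + (d^T *m N *m d) 0 0.
Proof.
move=> NT.
have trB : forall k l (P Q : 'M[R]_(k,l)), (P - Q)^T = P^T - Q^T.
  by move=> *; apply/matrixP=> a b; rewrite !mxE.
rewrite trB mulmxBl !mulmxBr !mulmxBl !eB.
have -> : (w^T *m N *m d) 0 0 = (d^T *m N *m w) 0 0.
  by rewrite -(tr1 _ (w^T *m N *m d)) !trmx_mul trmxK NT mulmxA.
lra.
Qed.

Lemma dir (R : realType) m n (A : 'M[R]_(m, n)) (y : 'cV[R]_m) (gamma mu : R)
  (p : 'cV[R]_n) (i : 'I_n) (t : R) :
  CR_dual A y gamma mu (p + t *: delta_mx i 0) - CR_dual A y gamma mu p =
   t * (invmx (A^T *m A) *m (A^T *m y - (2 * gamma)^-1 *: p)) i 0 * (2 * (2 * gamma)^-1)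
   - t ^+ 2 * ((2 * gamma)^-1 ^+ 2 * invmx (A^T *m A) i i)
   + phi gamma mu (p i 0 + t) - phi gamma mu (p i 0).
Proof.
set N := invmx (A^T *m A).
set c := (2 * gamma)^-1.
set w := A^T *m y - c *: p.
have NT : N^T = N by rewrite /N trN_sym.
have wt : A^T *m y - c *: (p + t *: delta_mx i 0) = w - (c * t) *: delta_mx i 0.
  by rewrite /w scalerDr scalerA opprD addrA.
rewrite /CR_dual /= wt Qsub //.
have trZ : forall k l (a : R) (P : 'M[R]_(k,l)), (a *: P)^T = a *: P^T.
  by move=> *; apply/matrixP=> a b; rewrite !mxE.
have h1 : (((c * t) *: (delta_mx i 0 : 'cV[R]_n))^T *m N *m w) 0 0 = c * t * (N *m w) i 0.
  by rewrite trZ trmx_delta -!scalemxAl eZ -mulmxA deltaL.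
have h2 : (((c * t) *: (delta_mx i 0 : 'cV[R]_n))^T *m N *m ((c * t) *: (delta_mx i 0 : 'cV[R]_n))) 0 0
     = (c * t) ^+ 2 * N i i.
  rewrite trZ trmx_delta -!scalemxAl -scalemxAr !eZ -colE mxE deltaL.
  by rewrite mulrA expr2.
rewrite h1 h2.
have hs : \sum_(j < n) Num.min 0 (mu - (p + t *: delta_mx i 0) j 0 ^+ 2 / (4 * gamma))
   = phi gamma mu (p i 0 + t) + \sum_(j < n | j != i) phi gamma mu (p j 0).
  rewrite (bigD1 i) //=; congr (_ + _).
    by rewrite /phi !mxE eqxx mulr1.
  apply: eq_bigr => j ji; rewrite /phi !mxE (negbTE ji) /= mulr0 addr0.
  done.
have hs2 : \sum_(j < n) Num.min 0 (mu - p j 0 ^+ 2 / (4 * gamma))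
   = phi gamma mu (p i 0) + \sum_(j < n | j != i) phi gamma mu (p j 0).
  by rewrite (bigD1 i).
rewrite hs hs2.
rewrite exprMn.
lra.
Qed.

Lemma dual_ub (R : realType) m n (A : 'M[R]_(m, n)) (y : 'cV[R]_m) (gamma mu : R)
  (q : 'cV[R]_n) (i : 'I_n) : A^T *m A \in unitmx -> 0 < gamma ->
  CR_dual A y gamma mu q <= sqnorm y + mu - q i 0 ^+ 2 / (4 * gamma).
Proof.
move=> Mu g0.
have K := @keyid R m n A y gamma q 0 Mu (lt0r_neq0 g0); simpl in K.
have K0 := sqnorm_ge0 _ _ (A *m (0 - invmx (A^T *m A) *m
                 (A^T *m y - (2 * gamma)^-1 *: q))).
rewrite mulmx0 subr0 big1 ?mulr0 ?addr0 in K; last by move=> j _; rewrite mxE mulr0.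
have hs : \sum_(j < n) Num.min 0 (mu - q j 0 ^+ 2 / (4 * gamma)) <=
   mu - q i 0 ^+ 2 / (4 * gamma).
  rewrite (bigD1 i) //=.
  have : \sum_(j < n | j != i) Num.min 0 (mu - q j 0 ^+ 2 / (4 * gamma)) <= 0.
    by apply: sumr_le0 => j _; rewrite ge_min lexx.
  have : Num.min 0 (mu - q i 0 ^+ 2 / (4 * gamma)) <= mu - q i 0 ^+ 2 / (4 * gamma).
    by rewrite ge_min lexx orbT.
  lra.
rewrite /CR_dual /=; lra.
Qed.

Theorem mainTheorem3 (R : realType) (m n : nat) (A : 'M[R]_(m, n)) (y : 'cV[R]_m)
    (gamma mu : R) :
  A^T *m A \in unitmx -> 0 < gamma -> 0 <= mu ->
  exists p : 'cV[R]_n,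
    zeta_CR A y gamma mu = (CR_dual A y gamma mu p)%:E /\
    (forall q : 'cV[R]_n, CR_dual A y gamma mu q <= CR_dual A y gamma mu p).
Proof.
move=> Mu g0 m0.
set D := CR_dual A y gamma mu.
pose S := sqnorm y + mu - D 0.
pose K := 4 * gamma * (`|S| + 1) + 1.
have K1 : 1 <= K by rewrite /K lerDr mulr_ge0 // ?mulr_ge0 ?ler0n ?ltW // addr_ge0.
have [c cB cmax] := @exists_max_box R n (fun r => D r^T) K (le_trans ler01 K1)
   (@dual_cont R m n A y gamma mu).
pose p := c^T.
have pmax : forall q, D q <= D p.
  move=> q; case: (boolP [forall i, `|q i 0| <= K]) => [/forallP hq | /forallPn [i hi]].
    have := cmax q^T; rewrite trmxK; apply => j; rewrite mxE; exact: hq.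
  have D0 : D 0 <= D p.
    have := cmax 0; rewrite trmx0; apply => j; rewrite mxE normr0.
    exact: le_trans ler01 K1.
  apply: le_trans D0; apply: ltW.
  apply: (le_lt_trans (@dual_ub R m n A y gamma mu q i Mu g0)).
  rewrite -ltNge in hi.
  have hq2 : K ^+ 2 < q i 0 ^+ 2.
    rewrite -real_normK ?num_real // -[q i 0 ^+ 2]real_normK ?num_real //.
    by rewrite ltr_pXn2r // ?nnegrE ?normr_ge0 // ger0_norm // ?(le_trans ler01 K1).
  have KK : K <= K ^+ 2 by rewrite expr2 ler_peMl // (le_trans ler01 K1).
  have g4 : 0 < 4 * gamma by rewrite mulr_gt0 // ltr0n.
  have hS : S * (4 * gamma) < q i 0 ^+ 2.
    have : S * (4 * gamma) <= `|S| * (4 * gamma) by rewrite ler_pM2r // ler_norm.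
    have hK : K = 4 * gamma * (`|S| + 1) + 1 by [].
    move: KK hq2; rewrite hK; nra.
  have : S < q i 0 ^+ 2 / (4 * gamma) by rewrite ltr_pdivlMr.
  rewrite /S; lra.
pose N := invmx (A^T *m A).
pose w := A^T *m y - (2 * gamma)^-1 *: p.
pose xs := N *m w.
have hz : forall i : 'I_n, exists z : R, (0 <= z <= 1) /\ (z = 0 -> xs i 0 = 0) /\
    pr (xs i 0) z / gamma + mu * z = p i 0 * xs i 0 / gamma + phi gamma mu (p i 0).
  move=> i; apply: (@coord_opt R gamma mu ((2 * gamma)^-1 ^+ 2 * N i i)) => // t.
  have := @dir R m n A y gamma mu p i t; rewrite -/D -/N -/w -/xs => e.
  have : D (p + t *: delta_mx i 0) - D p <= 0 by rewrite subr_le0 pmax.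
  rewrite e.
  have -> : 2 * (2 * gamma)^-1 = gamma^-1.
    by rewrite invfM mulrA divff ?mul1r // pnatr_eq0.
  by rewrite mulrA.
have [zf hzf] := fin_all_exists hz.
pose zs : 'cV[R]_n := \col_i zf i.
have zsE : forall i, zs i 0 = zf i by move=> i; rewrite mxE.
have fz : CR_feasible zs by move=> i; rewrite zsE; case: (hzf i).
have objE : CR_obj A y gamma mu xs zs = (D p)%:E.
  have pE : forall j, persp (xs j ord0) (zs j ord0) = (pr (xs j 0) (zs j 0))%:E.
    move=> j; apply: persp_pr; rewrite zsE.
    case: (hzf j) => _ [hx _]; apply/negP => /andP[/eqP z0 /eqP]; apply.
    exact: hx.
  rewrite /CR_obj (eq_bigr _ (fun j _ => pE j)) sumEFin -EFinM -!EFinD.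
  congr (_%:E).
  have Kid := @keyid R m n A y gamma p xs Mu (lt0r_neq0 g0); simpl in Kid.
  rewrite -/N -/w -/xs subrr mulmx0 in Kid.
  have s0 : sqnorm (0 : 'cV[R]_m) = 0 by rewrite /sqnorm big1 // => j _; rewrite mxE expr0n.
  rewrite s0 in Kid.
  have F : \sum_(i < n) (pr (xs i 0) (zs i 0) / gamma + mu * zs i 0) =
           \sum_(i < n) (p i 0 * xs i 0 / gamma + phi gamma mu (p i 0)).
    by apply: eq_bigr => i _; rewrite zsE; case: (hzf i) => _ [].
  have e1 : \sum_(i < n) (p i 0 * xs i 0 / gamma + phi gamma mu (p i 0)) =
     gamma^-1 * \sum_(i < n) p i 0 * xs i 0 + \sum_(i < n) phi gamma mu (p i 0).
    by rewrite big_split /= mulr_sumr; congr (_ + _); apply: eq_bigr => i _; rewrite mulrC.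
  have e2 : \sum_(i < n) (pr (xs i 0) (zs i 0) / gamma + mu * zs i 0) =
     gamma^-1 * \sum_(i < n) pr (xs i 0) (zs i 0) + mu * \sum_(i < n) zs i 0.
    by rewrite big_split /= !mulr_sumr; congr (_ + _); apply: eq_bigr => i _; rewrite mulrC.
  have e3 : \sum_(i < n) Num.min 0 (mu - p i 0 ^+ 2 / (4 * gamma)) =
     \sum_(i < n) phi gamma mu (p i 0) by [].
  rewrite /D /CR_dual /= e3 -/N -/w; lra.
exists p; split => //.
apply/eqP; rewrite eq_le; apply/andP; split.
  apply: ge_ereal_inf; exists (CR_obj A y gamma mu xs zs); last by rewrite objE.
  by exists xs, zs.
apply: le_ereal_inf_tmp => _ [x [z [fz' ->]]].
exact: weak.
Qed.
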